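(* Let $(X,\mathrm{dist})$ be a metric space, $\Sigma$ a metric space, and $\{U_\sigma(t,\tau)\}_{\sigma\in\Sigma}$ a family of processes on $X$. If $K_1,K_2\subset X$ are compact uniformly attracting sets for the family, then $K_1\cap K_2$ is a compact uniformly attracting set for the family.
   Context: A process on $X$ is a family of maps $U(t,\tau):X\to X$, indexed by reals $t\ge\tau$, with $U(\tau,\tau)=\mathrm{id}_X$ and $U(t,\tau)=U(t,s)U(s,\tau)$ for $t\ge s\ge\tau$; no continuity is assumed. For nonempty $B,C\subset X$, $\delta_X(B,C)=\sup_{x\in B}\inf_{\xi\in C}\mathrm{dist}(x,\xi)$. A set $K\subset X$ is uniformly attracting if for every bounded $C\subset X$, $\lim_{t-\tau\to\infty}\sup_{\sigma\in\Sigma}\delta_X(U_\sigma(t,\tau)C,K)=0$. *)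

(* Defs.v *)
From HB Require Import structures.
From mathcomp Require Import all_boot all_order all_algebra.
From mathcomp Require Import all_classical all_reals all_analysis.
Set Implicit Arguments. Unset Strict Implicit. Unset Printing Implicit Defensive.
Import Order.TTheory GRing.Theory Num.Theory.
Local Open Scope classical_set_scope.
Local Open Scope ring_scope.

Section Defs.
Context {R : realType} {X : metricType R}.

Definition is_process (U : R -> R -> X -> X) : Prop :=
  (forall tau : R, forall x, U tau tau x = x) /\
  (forall t s tau : R, tau <= s -> s <= t ->
     forall x, U t tau x = U t s (U s tau x)).

Definition hsemidist (B C : set X) : \bar R :=
  ereal_sup [set ereal_inf [set (mdist x xi)%:E | xi in C] | x in B].

Definition mbounded (C : set X) : Prop :=
  exists (x0 : X) (r : R), forall x, C x -> mdist x0 x <= r.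

Definition uniformly_attracting {S : Type} (U : S -> R -> R -> X -> X)
    (K : set X) : Prop :=
  forall C : set X, mbounded C ->
  forall eps : R, 0 < eps -> exists T : R,
    forall t tau : R, tau <= t -> T <= t - tau ->
    (ereal_sup [set hsemidist (U sigma t tau @` C) K | sigma in [set: S]]
      <= eps%:E)%E.

End Defs.

(* Main.v *)
Require Import Defs.
From HB Require Import structures.
From mathcomp Require Import all_boot all_order all_algebra.
From mathcomp Require Import all_classical all_reals all_analysis.
From mathcomp Require Import lra.
Import Order.TTheory GRing.Theory Num.Theory.
Local Open Scope classical_set_scope.
Local Open Scope ring_scope.

Section H.
Context {R : realType} {X : metricType R}.

Lemma hsd_lt (B K : set X) (e e' : R) x : (hsemidist B K <= e%:E)%E -> e < e' -> B x ->
  exists2 k, K k & mdist x k < e'.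
Proof.
move=> H ee' Bx.
have : (ereal_inf [set (mdist x xi)%:E | xi in K] < e'%:E)%E.
  apply: (le_lt_trans _ (_ : e%:E < e'%:E)%E); last by rewrite lte_fin.
  apply: le_trans H; apply: ereal_sup_ubound; by exists x.
move=> /ereal_inf_lt [_ [k Kk <-]]; rewrite lte_fin => h; by exists k.
Qed.

Lemma hsd_le (B K : set X) (e : R) :
  (forall x, B x -> exists2 k, K k & mdist x k <= e) -> (hsemidist B K <= e%:E)%E.
Proof.
move=> H; apply: ge_ereal_sup => _ [x Bx <-].
have [k Kk hk] := H x Bx.
apply: le_trans (_ : (mdist x k)%:E <= e%:E)%E; last by rewrite lee_fin.
apply: ereal_inf_lbound; by exists k.
Qed.

Lemma keylem (K1 K2 : set X) (e : R) : compact K1 -> compact K2 -> 0 < e ->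
  exists2 d, 0 < d & forall a b, K1 a -> K2 b -> mdist a b < d ->
    exists2 k, (K1 `&` K2) k & mdist a k < e.
Proof.
move=> cK1 cK2 e0.
have clK2 : closed K2 by apply: compact_closed => //; exact: metric_hausdorff.
apply: contrapT => Hn.
pose bad a := K1 a /\ forall k, (K1 `&` K2) k -> e <= mdist a k.
pose Bs (d : R) := [set a | bad a /\ exists2 b, K2 b & mdist a b < d].
have Hne : forall d, 0 < d -> Bs d !=set0.
  move=> d d0; apply: contrapT => nB; apply: Hn; exists d => // a b K1a K2b ab.
  apply: contrapT => nk; apply: nB; exists a; split; last by exists b.
  split => // k Kk; rewrite leNgt; apply/negP => ak; apply: nk; by exists k.
have FF : Filter (filter_from [set d : R | 0 < d] Bs).
  apply: filter_from_filter; first by exists (1:R) => /=.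
  move=> i j i0 j0; exists (Num.min i j); first by rewrite /= lt_min i0 j0.
  move=> a [ba [b K2b hb]]; rewrite lt_min in hb; case/andP: hb => h1 h2.
  by split; split=> //; exists b.
have PF : ProperFilter (filter_from [set d : R | 0 < d] Bs).
  by apply: filter_from_proper => // i /Hne.
have FK1 : filter_from [set d : R | 0 < d] Bs K1.
  by exists 1 => //= a [[K1a _] _].
have [k [K1k clk]] := cK1 _ PF FK1.
have K2k : K2 k.
  apply: clK2 => B /nbhs_ballP [r /= r0 rB].
  have r20 : 0 < r / 2 by rewrite divr_gt0.
  have [a [[_ [b K2b hab]] hka]] := clk (Bs (r/2)) (ball k (r/2))
     (ex_intro2 _ _ (r/2) r20 (fun _ h => h) : filter_from [set d : R | 0 < d] Bs (Bs (r/2))) (nbhsx_ballx _ _ r20).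
  exists b; split => //; apply: rB.
  rewrite ballEmdist /= in hka *.
  rewrite ballEmdist /=.
  by rewrite (le_lt_trans (metric_triangle _ a _))// [r]splitr ltrD.
have [a [[[_ hbad] _] hka]] := clk (Bs 1) (ball k e)
     (ex_intro2 _ _ 1 ltr01 (fun _ h => h) : filter_from [set d : R | 0 < d] Bs (Bs 1)) (nbhsx_ballx _ _ e0).
have := hbad k (conj K1k K2k).
rewrite ballEmdist /= metric_sym in hka.
by rewrite leNgt hka.
Qed.
End H.

Theorem corollary2p8 (R : realType) (X : metricType R) (Sigma : metricType R)
  (U : Sigma -> R -> R -> X -> X) (K1 K2 : set X) :
  (forall sigma, is_process (U sigma)) ->
  compact K1 -> compact K2 ->
  uniformly_attracting U K1 -> uniformly_attracting U K2 ->
  compact (K1 `&` K2) /\ uniformly_attracting U (K1 `&` K2).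
Proof.
move=> _ cK1 cK2 A1 A2; split.
  apply: compact_closedI => //; apply: compact_closed => //; exact: metric_hausdorff.
move=> C bC eps eps0.
have e20 : 0 < eps / 2 by rewrite divr_gt0.
have [d d0 Hd] := @keylem R X K1 K2 (eps / 2) cK1 cK2 e20.
pose d' := Num.min d eps / 4.
have m1 : Num.min d eps <= d by rewrite ge_min lexx.
have m2 : Num.min d eps <= eps by rewrite ge_min lexx orbT.
have m0 : 0 < Num.min d eps by rewrite lt_min d0 eps0.
have d'0 : 0 < d' by rewrite /d' divr_gt0.
have [T1 H1] := A1 C bC d' d'0.
have [T2 H2] := A2 C bC d' d'0.
exists (Num.max T1 T2) => t tau tt hT.
apply: ge_ereal_sup => _ [sigma _ <-].
apply: hsd_le => _ [x Cx <-].
have Cy : (U sigma t tau @` C) (U sigma t tau x) by exists x.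
have hs1 : (hsemidist (U sigma t tau @` C) K1 <= d'%:E)%E.
  apply: le_trans (H1 t tau tt _); first by apply: ereal_sup_ubound; exists sigma.
  by apply: le_trans hT; rewrite le_max lexx.
have hs2 : (hsemidist (U sigma t tau @` C) K2 <= d'%:E)%E.
  apply: le_trans (H2 t tau tt _); first by apply: ereal_sup_ubound; exists sigma.
  by apply: le_trans hT; rewrite le_max lexx orbT.
have dd : d' < d' * 2 by lra.
have [a K1a ya] := @hsd_lt _ _ _ _ _ _ _ hs1 dd Cy.
have [b K2b yb] := @hsd_lt _ _ _ _ _ _ _ hs2 dd Cy.
have ab : mdist a b < d.
  apply: le_lt_trans (metric_triangle _ (U sigma t tau x) _) _.
  rewrite metric_sym; rewrite /d' in ya yb; lra.
have [k Kk ak] := Hd a b K1a K2b ab.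
exists k => //.
apply: le_trans (metric_triangle _ a _) _.
rewrite /d' in ya; lra.
Qed.
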